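(* For every Hopfian group $G$, $SC(G)=C(G)-1$.
   Context: In the category of groups, $X\leqslant^d G$ means there are homomorphisms $f:X\to G$, $g:G\to X$ with $g\circ f=\mathrm{id}_X$; $X<^s G$ means $X\leqslant^d G$ holds but $G\leqslant^d X$ fails. $C(G)$ is the number of isomorphism classes of groups $X$ with $X\leqslant^d G$ and $SC(G)$ the number of isomorphism classes of groups $X$ with $X<^s G$. A group is Hopfian if every surjective endomorphism is an automorphism. *)

(* Defs.v *)
Record Group := {
  carrier :> Type;
  op : carrier -> carrier -> carrier;
  e : carrier;
  inv : carrier -> carrier;
  op_assoc : forall x y z, op x (op y z) = op (op x y) z;
  op_e_l : forall x, op e x = x;
  op_e_r : forall x, op x e = x;
  op_inv_l : forall x, op (inv x) x = e;
  op_inv_r : forall x, op x (inv x) = e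
}.

Definition is_hom (X Y : Group) (f : X -> Y) : Prop :=
  forall x y : X, f (op X x y) = op Y (f x) (f y).

Definition dle (X G : Group) : Prop :=
  exists (f : X -> G) (g : G -> X),
    is_hom X G f /\ is_hom G X g /\ (forall x : X, g (f x) = x).

Definition slt (X G : Group) : Prop := dle X G /\ ~ dle G X.

Definition iso (X Y : Group) : Prop :=
  exists (f : X -> Y) (g : Y -> X),
    is_hom X Y f /\ is_hom Y X g /\
    (forall x, g (f x) = x) /\ (forall y, f (g y) = y).

Definition is_automorphism (G : Group) (f : G -> G) : Prop :=
  is_hom G G f /\
  exists g : G -> G, is_hom G G g /\ (forall x, g (f x) = x) /\ (forall x, f (g x) = x).

Definition Hopfian (G : Group) : Prop :=
  forall f : G -> G, is_hom G G f -> (forall y, exists x, f x = y) ->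
    is_automorphism G f.

(* The type of isomorphism classes of groups satisfying P; an isomorphism
   class is represented as the predicate "being isomorphic to X". *)
Definition IsoClasses (P : Group -> Prop) : Type :=
  { c : Group -> Prop | exists X : Group, P X /\ forall Y, c Y <-> iso Y X }.

Definition Cclasses (G : Group) : Type := IsoClasses (fun X => dle X G).
Definition SCclasses (G : Group) : Type := IsoClasses (fun X => slt X G).

Definition equipotent (A B : Type) : Prop :=
  exists f : A -> B, (forall x y, f x = f y -> x = y) /\ (forall y, exists x, f x = y).

(* Main.v *)
Require Import Defs.
From Stdlib Require Import Classical FunctionalExtensionality PropExtensionality ProofIrrelevance.

Lemma iso_refl (X : Group) : iso X X.
Proof. exists (fun x => x), (fun x => x). repeat split; intros; reflexivity. Qed.

Lemma iso_sym (X Y : Group) : iso X Y -> iso Y X.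
Proof. intros (f & g & hf & hg & h1 & h2). exists g, f. tauto. Qed.

Lemma iso_trans (X Y Z : Group) : iso X Y -> iso Y Z -> iso X Z.
Proof.
  intros (f & g & hf & hg & h1 & h2) (f' & g' & hf' & hg' & h1' & h2').
  exists (fun x => f' (f x)), (fun z => g (g' z)).
  repeat split; intros.
  - intros a b. simpl. rewrite (hf a b), hf'. reflexivity.
  - intros a b. simpl. rewrite (hg' a b), hg. reflexivity.
  - rewrite h1', h1. reflexivity.
  - rewrite h2, h2'. reflexivity.
Qed.

Lemma iso_dle (X Y : Group) : iso X Y -> dle X Y.
Proof. intros (f & g & hf & hg & h1 & h2). exists f, g. tauto. Qed.

Lemma hopf_iso (G X : Group) : Hopfian G -> dle X G -> dle G X -> iso X G.
Proof.
  intros hG (f & g & hf & hg & hgf) (f' & g' & hf' & hg' & hgf').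
  assert (hh : is_hom G G (fun y => g' (g y))).
  { intros a b. rewrite hg, hg'. reflexivity. }
  assert (hs : forall y, exists x, g' (g x) = y).
  { intros y. exists (f (f' y)). rewrite hgf, hgf'. reflexivity. }
  destruct (hG _ hh hs) as [_ (k & _ & hk & _)].
  assert (ginj : forall a b, g a = g b -> a = b).
  { intros a b E. rewrite <- (hk a), <- (hk b), E. reflexivity. }
  exists f, g. repeat split; auto; try (intros y; apply ginj; rewrite hgf; reflexivity).
Qed.

Lemma cls_eq (P : Group -> Prop) (c1 c2 : IsoClasses P) :
  proj1_sig c1 = proj1_sig c2 -> c1 = c2.
Proof.
  destruct c1 as [a pa], c2 as [b pb]; simpl; intros ->.
  f_equal. apply proof_irrelevance.
Qed.

Definition Gclass (G : Group) : Cclasses G.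
Proof.
  exists (fun Y => iso Y G). exists G. split.
  - apply iso_dle, iso_refl.
  - intros; tauto.
Defined.

Definition liftSC (G : Group) (c : SCclasses G) : Cclasses G.
Proof.
  destruct c as [c pc]. exists c.
  destruct pc as (X & [hX _] & hc). exists X. split; assumption.
Defined.

Definition themap (G : Group) (o : option (SCclasses G)) : Cclasses G :=
  match o with None => Gclass G | Some c => liftSC G c end.

Lemma some_not_G (G : Group) (c : SCclasses G) : liftSC G c <> Gclass G.
Proof.
  intros E. apply (f_equal (@proj1_sig _ _)) in E.
  destruct c as [c (X & [hX hn] & hc)]. simpl in E. subst c.
  apply hn. apply iso_dle. apply (proj1 (hc G)). apply iso_refl.
Qed.

Theorem corollary3p3 (G : Group) (hG : Hopfian G) :
  equipotent (option (SCclasses G)) (Cclasses G).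
Proof.
  exists (themap G). split.
  - intros [a|] [b|]; simpl; intros E.
    + f_equal. apply cls_eq. apply (f_equal (@proj1_sig _ _)) in E.
      destruct a, b; exact E.
    + exfalso; exact (some_not_G G a E).
    + exfalso; exact (some_not_G G b (eq_sym E)).
    + reflexivity.
  - intros [c pc].
    pose proof pc as (X & hX & hc).
    destruct (classic (dle G X)) as [hd | hn].
    + exists None. apply cls_eq. simpl.
      pose proof (hopf_iso G X hG hX hd) as hi.
      extensionality Y. apply propositional_extensionality.
      rewrite hc. split; intros H.
      * exact (iso_trans _ _ _ H (iso_sym _ _ hi)).
      * exact (iso_trans _ _ _ H hi).
    + assert (pc' : exists X, slt X G /\ forall Y, c Y <-> iso Y X).
      { exists X. split; [split|]; assumption. }
      exists (Some (exist _ c pc')). apply cls_eq. reflexivity.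
Qed.
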